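(* Let $V$ be a vector configuration of rank $r$. For every $s$ with $1\le s\le r-1$ there is a subconfiguration $W\subseteq V$ of rank $s$ such that $\mathrm{DD}(V)=\mathrm{DD}(W)+\mathrm{DD}(V/W)$, $\mathrm{DD}(W)\ge\min\{\mathrm{DD}(V),s\}$, and $W=\operatorname{lin}(W)\cap V$.
   Context: A vector configuration is a finite family (repetitions allowed) of vectors in a real vector space $E$; a subconfiguration is a subfamily, $\operatorname{rank}(W)=\dim\operatorname{lin}(W)$, cardinalities count multiplicities; $W=\operatorname{lin}(W)\cap V$ means the elements of $V$ lying in $\operatorname{lin}(W)$ are exactly those of $W$. The quotient $V/W$ is the configuration in $E/\operatorname{lin}(W)$ of the images of the elements of $V\setminus W$. Covector discrepancy: $\mathrm{DD}(X)=\max_f\big|\,|\{x\in X: f(x)>0\}|-|\{x\in X:f(x)<0\}|\,\big|$ over all linear functionals $f$ on the ambient space. *)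

(* Defs.v *)
From HB Require Import structures.
From mathcomp Require Import all_boot all_order all_algebra.
From mathcomp Require Import boolp reals.
Set Implicit Arguments. Unset Strict Implicit. Unset Printing Implicit Defensive.
Import Order.TTheory GRing.Theory Num.Theory.
Local Open Scope ring_scope.

(* A vector configuration in E = R^n (row vectors) is a family v : I -> 'rV[R]_n
   indexed by a finite type I (repetitions allowed).  A subconfiguration is a
   subset W : {set I} of the indices. *)

Section VC.
Variables (R : realType) (n : nat) (I : finType) (v : I -> 'rV[R]_n).

Definition fapp (f : 'cV[R]_n) (x : 'rV[R]_n) : R := (x *m f) 0 0.

Definition linW (W : {set I}) : 'M[R]_n := (\sum_(i in W) <<v i>>)%MS.

Definition crank (W : {set I}) : nat := \rank (linW W).

Definition imbalance (W : {set I}) (f : 'cV[R]_n) : nat :=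
  let pos := #|[set i in W | (0 < fapp f (v i))%R]| in
  let neg := #|[set i in W | (fapp f (v i) < 0)%R]| in
  `|pos - neg|%N.

(* DD(W): max over all linear functionals on E (the maximum exists since the
   values lie in [0, #|I|]). *)
Definition DD (W : {set I}) : nat :=
  \max_(k < #|I|.+1 | `[< exists f : 'cV[R]_n, imbalance W f = k >]) k.

(* DD(V/W): linear functionals on E / lin(W) are exactly the functionals on E
   vanishing on lin(W) (equivalently on the generators v i, i in W); the
   quotient configuration consists of the images of the elements of V \ W. *)
Definition DDquot (W : {set I}) : nat :=
  \max_(k < #|I|.+1 | `[< exists f : 'cV[R]_n,
        (forall i, i \in W -> fapp f (v i) = 0) /\ imbalance (~: W) f = k >]) k.

Definition lin_closed (W : {set I}) : Prop :=
  forall i, (v i <= linW W)%MS -> i \in W.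

End VC.

(* Main.v *)
Require Import Defs.
From HB Require Import structures.
From mathcomp Require Import all_boot all_order all_algebra.
From mathcomp Require Import boolp reals.
From mathcomp Require Import lra ring zify.
Set Implicit Arguments. Unset Strict Implicit. Unset Printing Implicit Defensive.
Import Order.TTheory GRing.Theory Num.Theory.
Local Open Scope ring_scope.

Section Dev.
Variables (R : realType) (n : nat) (I : finType) (v : I -> 'rV[R]_n).

Implicit Types (f g h k : 'cV[R]_n) (x y : 'rV[R]_n) (X A B C : {set I}).

Definition orth (f : 'cV[R]_n) (A : {set I}) := forall i, i \in A -> fapp f (v i) = 0.
Definition b2z (b : bool) : int := (b : nat)%:Z.
Definition sg (x : R) : int := b2z (0 < x) - b2z (x < 0).
Definition isum (X : {set I}) (f : 'cV[R]_n) : int := \sum_(i in X) sg (fapp f (v i)).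
Definition DDrel (A B : {set I}) : nat :=
  \max_(k < #|I|.+1 | `[< exists f, orth f A /\ imbalance v (B :\: A) f = k >]) k.

Lemma sum_bool_card (X : {set I}) (P : pred I) :
  (\sum_(i in X) b2z (P i) = #|[set i in X | P i]|%:Z)%R.
Proof.
rewrite -sum1_card (big_morph Posz PoszD (erefl _)).
rewrite big_mkcond [RHS]big_mkcond /=; apply: eq_bigr => i _.
by rewrite !inE; case: (i \in X); case: (P i).
Qed.

Lemma isum_imb X f : imbalance v X f = `|isum X f|%N.
Proof.
rewrite /imbalance /isum /sg sumrB !sum_bool_card //.
Qed.


Lemma fappN f x : fapp (- f) x = - fapp f x.
Proof. by rewrite /fapp mulmxN mxE. Qed.
Lemma fappD f g x : fapp (f + g) x = fapp f x + fapp g x.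
Proof. by rewrite /fapp mulmxDr mxE. Qed.
Lemma fappZ (a : R) f x : fapp (a *: f) x = a * fapp f x.
Proof. by rewrite /fapp -scalemxAr mxE. Qed.
Lemma fapp0 x : fapp 0 x = 0.
Proof. by rewrite /fapp mulmx0 mxE. Qed.

Lemma sgN (x : R) : sg (- x) = - sg x.
Proof. by rewrite /sg oppr_gt0 oppr_lt0 opprB. Qed.

Lemma isumN X f : isum X (- f) = - isum X f.
Proof. by rewrite /isum -sumrN; apply: eq_bigr => i _; rewrite fappN sgN. Qed.

Lemma imb_le X f : (imbalance v X f <= #|I|)%N.
Proof.
rewrite /imbalance.
set p := #|_|; set q := #|_|.
have hp : (p <= #|I|)%N by apply: max_card.
have hq : (q <= #|I|)%N by apply: max_card.
lia.
Qed.

Lemma DDrel_ub A B f : orth f A -> isum (B :\: A) f <= (DDrel A B)%:Z.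
Proof.
move=> hof.
have h : (imbalance v (B :\: A) f <= DDrel A B)%N.
  have hk : (imbalance v (B :\: A) f < #|I|.+1)%N by rewrite ltnS imb_le.
  apply: (bigop.bigmax_sup (Ordinal hk)) => //=.
  by apply/asboolP; exists f.
apply: le_trans (ler_norm _) _.
by rewrite -abszE lez_nat -isum_imb.
Qed.

Lemma DDrel_ex A B : exists f, orth f A /\ isum (B :\: A) f = (DDrel A B)%:Z.
Proof.
have hk : (imbalance v (B :\: A) 0 < #|I|.+1)%N by rewrite ltnS imb_le.
have P0 : `[< exists f, orth f A /\ imbalance v (B :\: A) f = Ordinal hk >].
  by apply/asboolP; exists 0; split => // i _; rewrite fapp0.
rewrite /DDrel (bigop.bigmax_eq_arg _ P0).
case: arg_maxnP => // j /asboolP [f [hof ef]] _.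
case: (lerP 0 (isum (B :\: A) f)) => hs.
  exists f; split => //; rewrite -ef isum_imb abszE.
  by rewrite ger0_norm.
exists (- f); split.
  by move=> i iA; rewrite fappN hof // oppr0.
by rewrite isumN -ef isum_imb abszE ltr0_norm.
Qed.


Lemma sg_pert (a c : R) : `|c| < `|a| -> sg (a + c) = sg a.
Proof.
move=> h; rewrite /sg.
have [ha|ha|ha] := ltrgtP a 0.
- rewrite (ltr0_norm ha) in h; move/ltr_normlP: h => [h1 h2].
  have h3 : a + c < 0 by lra.
  by rewrite ?h3 ?ha ?(lt_gtF h3) ?(lt_gtF ha).
- rewrite (gtr0_norm ha) in h; move/ltr_normlP: h => [h1 h2].
  have h3 : 0 < a + c by lra.
  by rewrite ?h3 ?ha ?(lt_gtF h3) ?(lt_gtF ha).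
- by rewrite ha normr0 ltNge normr_ge0 in h.
Qed.

Lemma sgZ (e b : R) : 0 < e -> sg (e * b) = sg b.
Proof. by move=> he; rewrite /sg pmulr_rgt0 // pmulr_rlt0. Qed.

Lemma sg0 : sg 0 = 0.
Proof. by rewrite /sg ltxx. Qed.

Lemma sg_eq0 (a : R) : (sg a == 0) = (a == 0).
Proof.
rewrite /sg; have [ha|ha|ha] := ltrgtP a 0.
- by rewrite ?ha ?(lt_gtF ha) ?(ltr_eqF ha).
- by rewrite ?ha ?(lt_gtF ha) ?(gtr_eqF ha).
- by rewrite ?ha ?ltxx ?eqxx.
Qed.

Lemma pert h k : exists2 d : R, 0 < d & forall e, 0 < e -> e <= d ->
  forall i, fapp h (v i) != 0 ->
    sg (fapp (h + e *: k) (v i)) = sg (fapp h (v i)).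
Proof.
pose d := \big[Order.min/1]_(i | fapp h (v i) != 0)
           (`|fapp h (v i)| / (`|fapp k (v i)| + 1)).
have hd : 0 < d.
  apply/bigmin_gtP; split => // i hi.
  by apply: divr_gt0; [rewrite normr_gt0 | apply: ltr_pwDr].
exists d => // e he hed i hi.
rewrite fappD fappZ; apply: sg_pert.
set a := fapp h (v i); set b := fapp k (v i).
have hq : e <= `|a| / (`|b| + 1).
  apply: le_trans hed _.
  exact: (bigmin_le_cond _ (fun i => `|fapp h (v i)| / (`|fapp k (v i)| + 1)) hi).
have hb := normr_ge0 b.
set q := `|a| / (`|b| + 1) in hq.
have hq2 : q * (`|b| + 1) = `|a|.
  by rewrite /q mulfVK // gt_eqF // ltr_pwDr.
rewrite normrM (gtr0_norm he).
nra.
Qed.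

Lemma mulmx_eq0_fapp f x : (x *m f == 0) = (fapp f x == 0).
Proof.
apply/eqP/eqP => [h|h]; first by rewrite /fapp h mxE.
apply/matrixP => p q; rewrite !ord1 [RHS]mxE; exact: h.
Qed.

Lemma linW_sub A B : A \subset B -> (linW v A <= linW v B)%MS.
Proof.
move=> sAB; apply/sumsmx_subP => i iA.
by apply: (sumsmx_sup i) => //; apply: (subsetP sAB).
Qed.

Lemma vi_lin A i : i \in A -> (v i <= linW v A)%MS.
Proof. by move=> iA; apply: (sumsmx_sup i) => //; rewrite genmxE. Qed.

Lemma orth_ker f A : orth f A -> (linW v A <= kermx f)%MS.
Proof.
move=> hf; apply/sumsmx_subP => i iA.
by rewrite genmxE sub_kermx mulmx_eq0_fapp hf.
Qed.

Lemma orth_lin f A x : orth f A -> (x <= linW v A)%MS -> fapp f x = 0.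
Proof.
move=> hf hx; apply/eqP; rewrite -mulmx_eq0_fapp -sub_kermx.
exact: submx_trans hx (orth_ker hf).
Qed.

Lemma sep (M : 'M[R]_n) x : ~~ (x <= M)%MS ->
  exists c : 'cV[R]_n, M *m c = 0 /\ fapp c x != 0.
Proof.
rewrite submxE => hx.
have [j hj] : exists j, (x *m cokermx M) 0 j != 0.
  apply/existsP; move: hx; apply: contraR; rewrite negb_exists => /forallP h.
  apply/eqP/matrixP => p q; rewrite !ord1 [RHS]mxE; apply/eqP/negPn; exact: h.
exists (col j (cokermx M)); split.
  apply/matrixP => p q; rewrite [RHS]mxE.
  transitivity ((M *m cokermx M) p j); last by rewrite mulmx_coker mxE.
  by rewrite !mxE; apply: eq_bigr => k _; rewrite !mxE.
suff -> : fapp (col j (cokermx M)) x = (x *m cokermx M) 0 j by [].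
by rewrite /fapp !mxE; apply: eq_bigr => k _; rewrite !mxE.
Qed.

Lemma orth_of_mx (M : 'M[R]_n) c A : (forall i, i \in A -> (v i <= M)%MS) ->
  M *m c = 0 -> orth c A.
Proof.
move=> hA hc i iA; apply/eqP; rewrite -mulmx_eq0_fapp.
by have /submxP [z ->] := hA i iA; rewrite -mulmxA hc mulmx0.
Qed.


Definition Zs h := [set i | fapp h (v i) == 0].
Definition closed X := lin_closed v X.

Lemma isum_setID X Y f : isum X f = isum (X :&: Y) f + isum (X :\: Y) f.
Proof. by rewrite /isum (big_setID Y). Qed.

Lemma isum_eq X f g : (forall i, i \in X -> sg (fapp f (v i)) = sg (fapp g (v i))) ->
  isum X f = isum X g.
Proof. by move=> h; apply: eq_bigr. Qed.

Lemma isum_Z X h : isum (X :&: Zs h) h = 0.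
Proof.
by apply: big1 => i; rewrite !inE => /andP [_ /eqP ->]; rewrite sg0.
Qed.

Lemma isum0 f : isum set0 f = 0.
Proof. by rewrite /isum big_set0. Qed.

Lemma isum_nz X h : isum X h = isum (X :\: Zs h) h.
Proof. by rewrite (isum_setID X (Zs h)) isum_Z add0r. Qed.

Lemma pert_comp h k : exists2 d : R, 0 < d & forall e, 0 < e -> e <= d ->
  forall i, sg (fapp (h + e *: k) (v i)) =
    if fapp h (v i) == 0 then sg (fapp k (v i)) else sg (fapp h (v i)).
Proof.
have [d hd hp] := pert h k; exists d => // e he hed i.
case: ifP => hi; last by rewrite hp // hi.
by rewrite fappD fappZ (eqP hi) add0r sgZ.
Qed.

Lemma isum_comp h k e X :
  (forall i, sg (fapp (h + e *: k) (v i)) =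
    if fapp h (v i) == 0 then sg (fapp k (v i)) else sg (fapp h (v i))) ->
  isum X (h + e *: k) = isum (X :&: Zs h) k + isum (X :\: Zs h) h.
Proof.
move=> hc; rewrite (isum_setID X (Zs h)); congr (_ + _); apply: eq_bigr => i;
  rewrite !inE hc.
  by case/andP => _ ->.
by case/andP => hi _; rewrite (negbTE hi).
Qed.

Lemma orthD f g A : orth f A -> orth g A -> orth (f + g) A.
Proof. by move=> hf hg i iA; rewrite fappD hf // hg // addr0. Qed.
Lemma orthZ (a : R) f A : orth f A -> orth (a *: f) A.
Proof. by move=> hf i iA; rewrite fappZ hf // mulr0. Qed.
Lemma orthN f A : orth f A -> orth (- f) A.
Proof. by move=> hf i iA; rewrite fappN hf // oppr0. Qed.
Lemma orth_sub f A A' : A' \subset A -> orth f A -> orth f A'.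
Proof. by move=> s hf i iA; apply: hf; apply: (subsetP s). Qed.

Lemma DDrel_self A : DDrel A A = 0%N.
Proof.
have [f [_ hf]] := DDrel_ex A A.
by move: hf; rewrite setDv isum0 => -[->].
Qed.

Lemma notin_lin A i : closed A -> i \notin A -> ~~ (v i <= linW v A)%MS.
Proof. by move=> hA; apply: contra => /hA. Qed.

Lemma generic A B : closed A ->
  exists f, [/\ orth f A, (forall i, i \in B :\: A -> fapp f (v i) != 0)
             & isum (B :\: A) f = DDrel A B].
Proof.
move=> hA; set X := B :\: A.
have [f0 [hf0 e0]] := DDrel_ex A B.
suff : forall N f, (#|X :&: Zs f| <= N)%N -> orth f A -> isum X f = DDrel A B ->
  exists f, [/\ orth f A, (forall i, i \in X -> fapp f (v i) != 0)
             & isum X f = DDrel A B].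
  by move/(_ _ f0 (leqnn _) hf0 e0).
elim => [|N IH] f hN hf ef.
  exists f; split => // i iX; apply/negP => hi.
  move: hN; rewrite leqn0 cards_eq0 => /eqP hE.
  have : i \in X :&: Zs f by rewrite inE iX /= inE hi.
  by rewrite hE inE.
have [hE|] := boolP (#|X :&: Zs f| == 0%N).
  apply: (IH f) => //; by rewrite (eqP hE).
rewrite cards_eq0 => /set0Pn [i0]; rewrite inE => /andP [i0X]; rewrite inE => /eqP fi0.
have i0nA : i0 \notin A by move: i0X; rewrite inE => /andP [].
have [k [hk ki0]] := sep (notin_lin hA i0nA).
have ok : orth k A by apply: (orth_of_mx _ hk) => i; apply: vi_lin.
have [d1 hd1 hc1] := pert_comp f k.
have [d2 hd2 hc2] := pert_comp f (- k).
have hc1' := hc1 d1 hd1 (lexx _); have hc2' := hc2 d2 hd2 (lexx _).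
have o1 : orth (f + d1 *: k) A by apply: orthD => //; apply: orthZ.
have o2 : orth (f + d2 *: - k) A by apply: orthD => //; apply: orthZ; apply: orthN.
have u1 := DDrel_ub B o1; have u2 := DDrel_ub B o2.
rewrite -/X (isum_comp _ hc1') in u1; rewrite -/X (isum_comp _ hc2') in u2.
rewrite isumN in u2.
have eD : isum X f = isum (X :\: Zs f) f by apply: isum_nz.
have hz : isum (X :&: Zs f) k = 0.
  move: u1 u2; rewrite -eD ef.
  by move: (isum _ k) (DDrel A B) => c w; lia.
apply: (IH (f + d1 *: k)).
- rewrite -ltnS; apply: leq_trans hN; apply: proper_card.
  rewrite properEneq; apply/andP; split.
    apply/negP => /eqP hEq.
    have : i0 \in X :&: Zs f by rewrite inE i0X /= inE fi0 eqxx.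
    rewrite -hEq !inE fappD fappZ fi0 add0r mulf_eq0 (gt_eqF hd1) /= => /andP [_ /eqP].
    by move/eqP: ki0.
  apply/subsetP => i; rewrite !inE => /andP [-> hi] /=.
  apply/negP => /negP hfi.
  by move: (hc1' i); rewrite (negbTE hfi) (eqP hi) sg0 => /eqP; rewrite eq_sym sg_eq0 (negbTE hfi).
- exact: o1.
- by rewrite (isum_comp _ hc1') hz add0r -eD.
Qed.


Lemma super A C B : closed C -> A \subset C -> C \subset B ->
  (DDrel A C + DDrel C B <= DDrel A B)%N.
Proof.
move=> hC sAC sCB.
have [h [oh gh eh]] := generic B hC.
have [g [og eg]] := DDrel_ex A C.
have [d hd hc] := pert_comp h g.
have hc' := hc d hd (lexx d).
have o : orth (h + d *: g) A by apply: orthD; [apply: orth_sub sAC oh | apply: orthZ].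
have u := DDrel_ub B o.
rewrite (isum_comp _ hc') in u.
have e1 : (B :\: A) :&: Zs h = C :\: A.
  apply/setP => i; rewrite !inE.
  case iC: (i \in C).
    by rewrite (subsetP sCB i iC) (oh i iC) eqxx /= andbT.
  rewrite andbF; case iA: (i \in A) => //=; case iB: (i \in B) => //=.
  by have := gh i; rewrite !inE iC iB => /(_ isT) /negbTE ->.
have e2 : (B :\: A) :\: Zs h = B :\: C.
  apply/setP => i; rewrite !inE.
  case iC: (i \in C).
    by rewrite (oh i iC) eqxx.
  have iA : (i \in A) = false by apply/negP => /(subsetP sAC); rewrite iC.
  rewrite iA /=; case iB: (i \in B) => /=; last by rewrite andbF.
  by have := gh i; rewrite !inE iC iB => /(_ isT) ->.
rewrite e1 e2 eg eh in u.
by rewrite -lez_nat PoszD.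
Qed.


Lemma exists_min (D : {set I}) (F : I -> R) i0 : i0 \in D ->
  exists2 j, j \in D & forall i, i \in D -> F j <= F i.
Proof.
move=> h; case: (@arg_minP _ _ _ i0 (mem D) F h) => j jD jm.
by exists j => // i iD; apply: jm.
Qed.

Lemma sg_pos (c : R) : 0 < c -> sg c = 1.
Proof. by move=> h; rewrite /sg h (lt_gtF h). Qed.
Lemma sg_neg (c : R) : c < 0 -> sg c = -1.
Proof. by move=> h; rewrite /sg h (lt_gtF h). Qed.

Lemma sg_pos_mul (a c : R) : 0 < a * c -> sg c = sg a.
Proof.
move=> h; have [ha|ha|ha] := ltrgtP a 0.
- have hc : c < 0 by nra.
  by rewrite (sg_neg ha) (sg_neg hc).
- have hc : 0 < c by nra.
  by rewrite (sg_pos ha) (sg_pos hc).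
- by rewrite ha mul0r ltxx in h.
Qed.

Lemma sg_neg_mul (a c : R) : a * c < 0 -> sg c = - sg a.
Proof.
move=> h; rewrite -sgN; apply: sg_pos_mul; nra.
Qed.

Lemma sg_eq_mul (a b : R) : a != 0 -> sg b = sg a -> 0 < a * b.
Proof.
move=> ha; have [ha'|ha'|ha'] := ltrgtP a 0.
- rewrite (sg_neg ha'); have [hb|hb|hb] := ltrgtP b 0.
  + move=> _; nra.
  + by rewrite (sg_pos hb).
  + by rewrite hb sg0.
- rewrite (sg_pos ha'); have [hb|hb|hb] := ltrgtP b 0.
  + by rewrite (sg_neg hb).
  + move=> _; nra.
  + by rewrite hb sg0.
- by rewrite ha' eqxx in ha.
Qed.

Lemma sg_neq_mul (a b : R) : a != 0 -> sg b != sg a -> a * b <= 0.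
Proof.
move=> ha hs; rewrite leNgt; apply/negP => h.
by rewrite (sg_pos_mul h) eqxx in hs.
Qed.

Lemma sg_nz (a : R) : a != 0 -> sg a != 0.
Proof. by rewrite sg_eq0. Qed.

Lemma sgN_neq (a : R) : a != 0 -> - sg a != sg a.
Proof.
move=> ha; have [h|h|h] := ltrgtP a 0.
- by rewrite (sg_neg h).
- by rewrite (sg_pos h).
- by rewrite h eqxx in ha.
Qed.


Definition indep f g X := forall a b : R,
  (forall i, i \in X -> a * fapp f (v i) + b * fapp g (v i) = 0) -> a = 0 /\ b = 0.

Definition Dset X f g := [set i in X | sg (fapp f (v i)) != sg (fapp g (v i))].

Definition seg_concl A B f :=
  exists phi, [/\ orth phi A, exists2 j, j \in B :\: A & fapp phi (v j) != 0,
     (forall i, i \in B :\: A -> fapp phi (v i) != 0 ->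
        sg (fapp phi (v i)) = sg (fapp f (v i)))
   & 1 <= isum ((B :\: A) :&: Zs phi) f].

Lemma seg_step A B g f : orth g A -> isum (B :\: A) g < (DDrel A B)%:Z ->
  orth f A -> (forall i, i \in B :\: A -> fapp f (v i) != 0) ->
  isum (B :\: A) f = DDrel A B -> indep f g (B :\: A) ->
  seg_concl A B f \/
  exists f', [/\ orth f' A, (forall i, i \in B :\: A -> fapp f' (v i) != 0),
     isum (B :\: A) f' = DDrel A B, indep f' g (B :\: A)
   & Dset (B :\: A) f' g \proper Dset (B :\: A) f g].
Proof.
move=> og hg hof gf ef ind; set X := B :\: A.
set D := Dset X f g.
have DX : forall i, i \in D -> i \in X by move=> i; rewrite inE => /andP [].
have Dsg : forall i, i \in D -> sg (fapp f (v i)) != sg (fapp g (v i)).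
  by move=> i; rewrite inE => /andP [].
have nDsg : forall i, i \in X -> i \notin D -> sg (fapp f (v i)) = sg (fapp g (v i)).
  by move=> i iX; rewrite inE iX /= negbK => /eqP.
have [i0 i0D] : exists i0, i0 \in D.
  apply/set0Pn; apply/negP => /eqP hD.
  have : isum X g = isum X f.
    apply: isum_eq => i iX; apply/esym/nDsg => //; by rewrite hD inE.
  by move=> h; move: hg; rewrite -/X h ef ltxx.
pose ratio i := fapp f (v i) / (fapp f (v i) - fapp g (v i)).
have [j jD jmin] := exists_min ratio i0D.
set t := ratio j.
have Dfact : forall i, i \in D -> [/\ fapp f (v i) != 0,
    fapp f (v i) * fapp g (v i) <= 0,
    0 < fapp f (v i) * (fapp f (v i) - fapp g (v i)),
    ratio i * (fapp f (v i) - fapp g (v i)) = fapp f (v i) &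
    0 < ratio i <= 1].
  move=> i iD; have fi := gf i (DX i iD).
  have hab : fapp f (v i) * fapp g (v i) <= 0.
    by apply: sg_neq_mul fi _; rewrite eq_sym; exact: Dsg.
  set a := fapp f (v i) in fi hab *; set b := fapp g (v i) in hab *.
  have ha2 : 0 < a * a by rewrite lt_def mulf_neq0 //= -expr2 sqr_ge0.
  have hp : 0 < a * (a - b) by nra.
  have hab0 : a - b != 0 by apply/eqP => h; rewrite h mulr0 ltxx in hp.
  have hq : ratio i * (a - b) = a by rewrite /ratio mulfVK.
  split => //.
  set q := ratio i in hq *.
  have h1 : q * ((a - b) * (a - b)) = a * (a - b) by rewrite mulrA hq.
  have hsq : 0 < (a - b) * (a - b) by rewrite lt_def mulf_neq0 //= -expr2 sqr_ge0.
  apply/andP; split; nra.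
have [fj0 _ _ hqj /andP [t0 t1']] := Dfact j jD.
rewrite -/t in hqj t0 t1'.
pose phi := (1 - t) *: f + t *: g.
have fphi : forall i, fapp phi (v i) = (1 - t) * fapp f (v i) + t * fapp g (v i).
  by move=> i; rewrite fappD !fappZ.
have ophi : orth phi A by apply: orthD; apply: orthZ.
have jX := DX j jD.
have agree : forall i, i \in X -> fapp phi (v i) != 0 ->
    sg (fapp phi (v i)) = sg (fapp f (v i)).
  move=> i iX hphi; apply: sg_pos_mul.
  have fi := gf i iX.
  case iD: (i \in D).
    have [_ hab hp hq /andP [q0 q1]] := Dfact i iD.
    have hti : t <= ratio i by apply: jmin.
    move: hphi; rewrite fphi.
    set a := fapp f (v i) in fi hab hp hq *; set b := fapp g (v i) in hab hp hq *.
    set q := ratio i in hq q0 q1 hti *.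
    move=> hphi.
    have h1 : a * ((1 - t) * a + t * b) = (q - t) * (a * (a - b)).
      apply/eqP; rewrite -subr_eq0; apply/eqP.
      transitivity (a * (a - q * (a - b))); first ring.
      by rewrite hq subrr mulr0.
    have h2 : 0 <= a * ((1 - t) * a + t * b) by rewrite h1; apply: mulr_ge0 => //; [rewrite subr_ge0 | apply: ltW].
    by rewrite lt_def h2 mulf_neq0.
  have hs := nDsg i iX (negbT iD).
  have hab := sg_eq_mul fi (esym hs).
  rewrite fphi.
  set a := fapp f (v i) in fi hab *; set b := fapp g (v i) in hab *.
  have ha2 : 0 < a * a by rewrite lt_def mulf_neq0 //= -expr2 sqr_ge0.
  nra.
have phij : fapp phi (v j) = 0.
  rewrite fphi; transitivity (fapp f (v j) - t * (fapp f (v j) - fapp g (v j))).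
    ring.
  by rewrite hqj subrr.
have [y yX hy] : exists2 y, y \in X & fapp phi (v y) != 0.
  case: (boolP [exists y in X, fapp phi (v y) != 0]) => [/exists_inP // | /exists_inPn hall].
  have [_ ht0] := ind (1 - t) t (fun i iX => etrans (esym (fphi i)) (eqP (negbNE (hall i iX)))).
  by rewrite ht0 ltxx in t0.
case: (lerP 1 (isum (X :&: Zs phi) f)) => hc.
  by left; exists phi; split => //; exists y.
right.
have ef2 : isum X f = isum (X :&: Zs phi) f + isum (X :\: Zs phi) f by apply: isum_setID.
have agreeS : isum (X :\: Zs phi) phi = isum (X :\: Zs phi) f.
  apply: isum_eq => i; rewrite in_setD => /andP [hz iX]; apply: agree => //.
  by rewrite inE in hz.
have tl1 : t < 1.
  rewrite lt_neqAle t1' andbT; apply/eqP => ht.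
  have hgp : isum X g = isum X phi.
    by apply: isum_eq => i _; rewrite fphi ht subrr mul0r add0r mul1r.
  rewrite hgp isum_nz agreeS in hg.
  rewrite ef2 in ef.
  move: hg hc; rewrite -ef.
  move: (isum (X :&: Zs phi) f) (isum (X :\: Zs phi) f) => c w; lia.
have [d hd hcomp] := pert_comp phi (g - f).
pose e := Num.min d ((1 - t) / 2).
have he : 0 < e by rewrite lt_min hd /= divr_gt0 // subr_gt0.
have hed : e <= d by rewrite ge_min lexx.
have het : e <= (1 - t) / 2 by rewrite ge_min lexx orbT.
have hc' := hcomp e he hed.
pose f' := phi + e *: (g - f).
have ff' : forall i, fapp f' (v i) = (1 - t - e) * fapp f (v i) + (t + e) * fapp g (v i).
  by move=> i; rewrite /f' fappD fappZ fappD fappN fphi; ring.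
have Zfact : forall i, i \in X -> fapp phi (v i) = 0 ->
    fapp f (v i) * fapp g (v i) < 0 /\ sg (fapp (g - f) (v i)) = - sg (fapp f (v i)).
  move=> i iX; rewrite fphi fappD fappN => hz.
  have fi := gf i iX.
  set a := fapp f (v i) in fi hz *; set b := fapp g (v i) in hz *.
  have ha2 : 0 < a * a by rewrite lt_def mulf_neq0 //= -expr2 sqr_ge0.
  have h1 : t * (a * b) = - ((1 - t) * (a * a)).
    have : a * ((1 - t) * a + t * b) = 0 by rewrite hz mulr0.
    move=> h; transitivity (a * ((1 - t) * a + t * b) - (1 - t) * (a * a)); first ring.
    by rewrite h sub0r.
  have hab : a * b < 0.
    have h2 : 0 < (1 - t) * (a * a) by apply: mulr_gt0 => //; rewrite subr_gt0.
    have h3 : t * (a * b) < 0 by rewrite h1 oppr_lt0.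
    by rewrite pmulr_rlt0 in h3.
  split => //; apply: sg_neg_mul; rewrite mulrBr; lra.
have sgf' : forall i, i \in X -> sg (fapp f' (v i)) =
    if fapp phi (v i) == 0 then - sg (fapp f (v i)) else sg (fapp f (v i)).
  move=> i iX; rewrite /f' hc'; case: ifP => hz.
    by have [_ ->] := Zfact i iX (eqP hz).
  by rewrite agree // hz.
have of' : orth f' A.
  by apply: orthD => //; apply: orthZ; apply: orthD => //; apply: orthN.
exists f'; split => //.
- move=> i iX; rewrite -sg_eq0 sgf' //.
  by case: ifP => _; [rewrite oppr_eq0|]; apply: sg_nz; apply: gf.
- have u := DDrel_ub B of'; rewrite -/X in u.
  have e1 : isum (X :&: Zs phi) f' = - isum (X :&: Zs phi) f.
    rewrite -isumN; apply: isum_eq => i; rewrite in_setI => /andP [iX hz].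
    by rewrite inE in hz; rewrite sgf' // hz fappN sgN.
  have e2 : isum (X :\: Zs phi) f' = isum (X :\: Zs phi) f.
    apply: isum_eq => i; rewrite in_setD => /andP [hz iX].
    by rewrite inE in hz; rewrite sgf' // (negbTE hz).
  rewrite (isum_setID X (Zs phi)) e1 e2 in u *.
  rewrite ef2 in ef.
  move: u hc; rewrite -ef.
  move: (isum (X :&: Zs phi) f) (isum (X :\: Zs phi) f) => c w; lia.
- move=> al be h.
  have [h1 h2] : al * (1 - t - e) = 0 /\ al * (t + e) + be = 0.
    by apply: ind => i iX; rewrite -(h i iX) ff'; ring.
  have hpos : 0 < 1 - t - e by lra.
  have al0 : al = 0 by move/eqP: h1; rewrite mulf_eq0 (gt_eqF hpos) orbF => /eqP.
  by split => //; move: h2; rewrite al0 mul0r add0r.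
- rewrite properEneq; apply/andP; split.
    apply/negP => /eqP hEq.
    have : j \in Dset X f' g by rewrite hEq.
    have [hab _] := Zfact j jX phij.
    rewrite inE jX /= sgf' // phij eqxx.
    by rewrite -(sg_neg_mul hab) eqxx.
  apply/subsetP => i; rewrite inE => /andP [iX hi]; rewrite inE iX /=; move: hi.
  rewrite sgf' //; case: ifP => hz //.
  have [hab _] := Zfact i iX (eqP hz).
  by rewrite -(sg_neg_mul hab) eqxx.
Qed.


Lemma seg A B g : orth g A -> isum (B :\: A) g < (DDrel A B)%:Z ->
  forall N f, (#|Dset (B :\: A) f g| <= N)%N -> orth f A ->
  (forall i, i \in B :\: A -> fapp f (v i) != 0) ->
  isum (B :\: A) f = DDrel A B -> indep f g (B :\: A) ->
  exists f, [/\ orth f A, isum (B :\: A) f = DDrel A B & seg_concl A B f].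
Proof.
move=> og hg; elim => [|N IH] f hN hof gf ef ind.
  case: (seg_step og hg hof gf ef ind) => [hs|[f' [_ _ _ _ hp]]].
    by exists f.
  by have := proper_card hp; rewrite ltnNge (leq_trans hN).
case: (seg_step og hg hof gf ef ind) => [hs|[f' [of' gf' ef' ind' hp]]].
  by exists f.
apply: (IH f') => //.
by rewrite -ltnS; apply: leq_trans (proper_card hp) hN.
Qed.

Lemma fapp_mx (M : 'M[R]_n) c x : M *m c = 0 -> (x <= M)%MS -> fapp c x = 0.
Proof.
move=> hc hx; apply/eqP; rewrite -mulmx_eq0_fapp.
by have /submxP [z ->] := hx; rewrite -mulmxA hc mulmx0.
Qed.

Lemma crank_lt A C : A \subset C -> (exists2 i, i \in C & ~~ (v i <= linW v A)%MS) ->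
  (crank v A < crank v C)%N.
Proof.
move=> sAC [i iC hi].
have h : (linW v A < linW v C)%MS.
  rewrite ltmxE linW_sub //=; apply: contra hi => hCA.
  exact: submx_trans (vi_lin iC) hCA.
by move: h; rewrite ltmxErank => /andP [].
Qed.

Lemma closed_zero B phi : closed B -> closed [set i in B | fapp phi (v i) == 0].
Proof.
move=> hB j hj; rewrite inE.
have sCB : [set i in B | fapp phi (v i) == 0] \subset B.
  by apply/subsetP => i; rewrite inE => /andP [].
rewrite (hB j (submx_trans hj (linW_sub sCB))) /=.
apply/eqP; apply: orth_lin hj.
by move=> i; rewrite inE => /andP [_ /eqP].
Qed.

Lemma lin_all A B : (forall i, i \in B -> (v i <= linW v A)%MS) ->
  (linW v B <= linW v A)%MS.
Proof. by move=> h; apply/sumsmx_subP => i iB; rewrite genmxE; apply: h. Qed.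


Lemma mid A B : closed A -> closed B -> A \subset B ->
  (crank v A + 2 <= crank v B)%N ->
  exists C, [/\ closed C, A \subset C, C \subset B,
    (crank v A < crank v C)%N /\ (crank v C < crank v B)%N &
    (DDrel A B = DDrel A C + DDrel C B)%N /\ (minn (DDrel A B) 1 <= DDrel A C)%N].
Proof.
move=> hA hB sAB hr.
set X := B :\: A.
have [x xB hx] : exists2 x, x \in B & ~~ (v x <= linW v A)%MS.
  case: (boolP [exists x in B, ~~ (v x <= linW v A)%MS]) => [/exists_inP // | /exists_inPn hall].
  have := mxrankS (lin_all (fun i iB => negbNE (hall i iB))).
  by rewrite -/(crank v B) -/(crank v A) => h; move: hr; rewrite leqNgt (leq_ltn_trans h) // addn2.
set M := (linW v A + <<v x>>)%MS.
have [y yB hy] : exists2 y, y \in B & ~~ (v y <= M)%MS.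
  case: (boolP [exists y in B, ~~ (v y <= M)%MS]) => [/exists_inP // | /exists_inPn hall].
  have h1 : (linW v B <= M)%MS.
    by apply/sumsmx_subP => i iB; rewrite genmxE; apply: negbNE; apply: hall.
  have h2 := mxrankS h1.
  have [h3 _] := mxrank_adds_leqif (linW v A) <<v x>>%MS.
  have h4 : (\rank <<v x>>%MS <= 1)%N by rewrite mxrank_gen rank_leq_row.
  rewrite -/M in h3; move: hr; rewrite /crank; lia.
have [e [he ey]] := sep hy.
have AM : (linW v A <= M)%MS by apply: addsmxSl.
have xM : (v x <= M)%MS by apply: submx_trans (addsmxSr _ _); rewrite genmxE.
have oe : orth e A by apply: (orth_of_mx _ he) => i iA; apply: submx_trans AM; apply: vi_lin.
have ex : fapp e (v x) = 0 by apply: fapp_mx he xM.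
have xX : x \in X by rewrite inE xB andbT; apply: contra hx; apply: vi_lin.
have yX : y \in X.
  rewrite inE yB andbT; apply: contra hy => yA.
  by apply: submx_trans AM; apply: vi_lin.
have build : forall phi, orth phi A -> forall j, j \in B -> fapp phi (v j) != 0 ->
   let C := [set i in B | fapp phi (v i) == 0] in
   [/\ closed C, A \subset C, C \subset B, (crank v C < crank v B)%N &
        C :\: A = X :&: Zs phi /\ B :\: C = X :\: Zs phi].
  move=> phi ophi j jB hj C; split.
  - exact: closed_zero.
  - apply/subsetP => i iA; rewrite inE (subsetP sAB i iA) /=; apply/eqP; exact: ophi.
  - by apply/subsetP => i; rewrite inE => /andP [].
  - apply: crank_lt; first by apply/subsetP => i; rewrite inE => /andP [].
    exists j => //; apply: contra hj => hl; apply/eqP; apply: orth_lin hl.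
    by move=> i; rewrite inE => /andP [_ /eqP].
  - split; apply/setP => i; rewrite /X !inE.
      by case: (i \in A); case: (i \in B); case: (_ == 0).
    case iA: (i \in A) => /=; last by case: (i \in B); case: (_ == 0).
    rewrite andbF; have h0 := ophi i iA; rewrite h0 eqxx andbT; exact: andNb.
have [D0|Dpos] := posnP (DDrel A B).
  have ey' : fapp e (v y) != 0 by [].
  have [hC sAC sCB rCB [e1 e2]] := build e oe y yB ey'.
  exists [set i in B | fapp e (v i) == 0]; split => //.
    split => //; apply: crank_lt => //; exists x; first by rewrite inE xB ex eqxx.
    exact: hx.
  have := super hC sAC sCB; rewrite D0 leqn0 addn_eq0 => /andP [/eqP -> /eqP ->].
  by split.
have [f [hof gf ef]] := generic B hA.
have [g [og gneg gx gy]] : exists g, [/\ orth g A, isum X g <= 0,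
    fapp g (v x) = 0 & fapp g (v y) != 0].
  case: (lerP (isum X e) 0) => h.
    by exists e.
  exists (- e); split; [exact: orthN | by rewrite isumN oppr_le0 ltW
    | by rewrite fappN ex oppr0 | by rewrite fappN oppr_eq0].
have hg : isum X g < (DDrel A B)%:Z by apply: le_lt_trans gneg _; rewrite ltz_nat.
have ind : indep f g X.
  move=> a b h.
  have := h x xX; rewrite gx mulr0 addr0 => /eqP; rewrite mulf_eq0 (negbTE (gf x xX)) orbF => /eqP a0.
  have := h y yX; rewrite a0 mul0r add0r => /eqP; rewrite mulf_eq0 (negbTE gy) orbF => /eqP b0.
  by [].
have [f2 [of2 ef2 [phi [ophi [j jX hj] agree hc]]]] :=
  seg og hg (leqnn _) hof gf ef ind.
have jB : j \in B by move: jX; rewrite inE => /andP [].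
have [hC sAC sCB rCB [e1 e2]] := build phi ophi j jB hj.
exists [set i in B | fapp phi (v i) == 0]; split => //.
  split => //; apply: crank_lt => //.
  have [i iCA] : exists i, i \in [set i in B | fapp phi (v i) == 0] :\: A.
    apply/set0Pn; apply/negP => /eqP h0.
    by move: hc; rewrite -e1 h0 isum0.
  case/setDP: iCA => iC iA.
  by exists i => //; apply: notin_lin.
set C := [set i in B | fapp phi (v i) == 0] in hC sAC sCB rCB e1 e2 *.
have u1 := DDrel_ub C of2.
have oC : orth phi C by move=> i; rewrite inE => /andP [_ /eqP].
have u2 := DDrel_ub B oC.
have e3 : isum (B :\: C) phi = isum (B :\: C) f2.
  rewrite e2; apply: isum_eq => i; rewrite in_setD => /andP [hz iX].
  by apply: agree => //; rewrite inE in hz.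
rewrite e3 e2 in u2; rewrite e1 in u1.
have ef3 := isum_setID X (Zs phi) f2.
rewrite -/X ef2 in ef3.
have hs := super hC sAC sCB.
have le1 : (DDrel A B <= DDrel A C + DDrel C B)%N.
  rewrite -lez_nat PoszD ef3; exact: lerD.
split; first by apply/eqP; rewrite eqn_leq le1 hs.
have : (1 <= DDrel A C)%N by rewrite -lez_nat; apply: le_trans hc u1.
by move=> h; apply: leq_trans h; apply: geq_minr.
Qed.


Lemma L1 m : forall A B, (crank v B <= m)%N -> closed A -> closed B -> A \subset B ->
  (crank v A < crank v B)%N ->
  exists C, [/\ closed C, A \subset C, C \subset B, crank v C = (crank v A).+1 &
    (DDrel A B = DDrel A C + DDrel C B)%N /\ (minn (DDrel A B) 1 <= DDrel A C)%N].
Proof.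
elim: m => [|m IH] A B hm hA hB sAB hr.
  by move: hr; rewrite ltnNge (leq_trans hm).
case: (ltnP (crank v A).+1 (crank v B)) => h.
  have h2 : (crank v A + 2 <= crank v B)%N by rewrite addn2.
  have [C0 [hC0 sAC0 sC0B [r1 r2] [eq0 min0]]] := mid hA hB sAB h2.
  have hm' : (crank v C0 <= m)%N by rewrite -ltnS; apply: leq_trans r2 hm.
  have [C [hC sAC sCC0 rC [eq1 min1]]] := IH A C0 hm' hA hC0 sAC0 r1.
  have sCB : C \subset B by apply: subset_trans sC0B.
  have s1 := super hC0 sCC0 sC0B.
  have s2 := super hC sAC sCB.
  exists C; split => //.
  split; first by lia.
  move: min0 min1; rewrite eq1 in eq0 *; lia.
have eB : crank v B = (crank v A).+1 by apply/eqP; rewrite eqn_leq h hr.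
exists B; split => //.
by rewrite DDrel_self addn0; split => //; apply: geq_minl.
Qed.

Lemma Qchain s : forall A B, closed A -> closed B -> A \subset B ->
  (crank v A + s <= crank v B)%N ->
  exists C, [/\ closed C, A \subset C, C \subset B, crank v C = (crank v A + s)%N &
    (DDrel A B = DDrel A C + DDrel C B)%N /\ (minn (DDrel A B) s <= DDrel A C)%N].
Proof.
elim: s => [|s IH] A B hA hB sAB hr.
  exists A; split => //; first by rewrite addn0.
  by rewrite DDrel_self add0n minn0.
have hr1 : (crank v A < crank v B)%N by move: hr; rewrite addnS => /(leq_trans _); apply; apply: leq_addr.
have [C1 [hC1 sAC1 sC1B rC1 [eq1 min1]]] := L1 (leqnn _) hA hB sAB hr1.
have hr2 : (crank v C1 + s <= crank v B)%N by rewrite rC1; lia.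
have [C [hC sC1C sCB rC [eq2 min2]]] := IH C1 B hC1 hB sC1B hr2.
have sAC : A \subset C by apply: subset_trans sC1C.
have s1 := super hC1 sAC1 sC1C.
have s2 := super hC sAC sCB.
exists C; split => //; first by rewrite rC rC1; lia.
split; first by lia.
move: min1 min2; lia.
Qed.


Lemma DDrel_cmp A X A' X' :
  (forall f, orth f A -> orth f A' /\ isum (X :\: A) f = isum (X' :\: A') f) ->
  (DDrel A X <= DDrel A' X')%N.
Proof.
move=> H; have [f [hf ef]] := DDrel_ex A X.
have [h1 h2] := H f hf.
by rewrite -lez_nat -ef h2; apply: DDrel_ub.
Qed.

Lemma DD_rel X : DD v X = DDrel set0 X.
Proof.
rewrite /DD /DDrel; apply: eq_bigl => k; apply/asboolP/asboolP.
  by case=> f hf; exists f; split; [move=> i; rewrite inE | rewrite setD0].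
by case=> f [_ hf]; exists f; rewrite setD0 in hf.
Qed.

Lemma DDq_rel W : DDquot v W = DDrel W setT.
Proof.
rewrite /DDquot /DDrel; apply: eq_bigl => k; apply/asboolP/asboolP.
  by case=> f [h1 h2]; exists f; split => //; rewrite setTD.
by case=> f [h1 h2]; exists f; split => //; rewrite setTD in h2.
Qed.

Definition A0 := [set i | (v i <= linW v set0)%MS].

Lemma orthA0 f : orth f A0.
Proof.
move=> i; rewrite inE => hi; apply: orth_lin hi.
by move=> j; rewrite inE.
Qed.

Lemma closedA0 : closed A0.
Proof.
move=> j hj; rewrite inE; apply: submx_trans hj _.
by apply: lin_all => i; rewrite inE.
Qed.

Lemma crankA0 : crank v A0 = 0%N.
Proof.
apply/eqP; rewrite -leqn0 /crank.
have h : (linW v A0 <= linW v set0)%MS by apply: lin_all => i; rewrite inE.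
have e0 : linW v set0 = 0 by rewrite /linW big_set0.
by move: (mxrankS h); rewrite e0 mxrank0.
Qed.

Lemma DD_A0 X : DD v X = DDrel A0 X.
Proof.
rewrite DD_rel.
have hi : forall f, isum X f = isum (X :\: A0) f.
  move=> f; rewrite (isum_setID X A0).
  suff -> : isum (X :&: A0) f = 0 by rewrite add0r.
  by apply: big1 => i; rewrite inE => /andP [_ hi]; rewrite (orthA0 f hi) sg0.
apply/eqP; rewrite eqn_leq; apply/andP; split; apply: DDrel_cmp => f hf; split.
- exact: orthA0.
- by rewrite setD0 hi.
- by move=> i; rewrite inE.
- by rewrite setD0 hi.
Qed.

Lemma main_sec s : (1 <= s <= crank v [set: I] - 1)%N ->
  exists W : {set I},
    [/\ crank v W = s,
        DD v [set: I] = (DD v W + DDquot v W)%N,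
        (minn (DD v [set: I]) s <= DD v W)%N
      & lin_closed v W].
Proof.
move=> /andP [s1 s2].
have hT : closed [set: I] by move=> i _; rewrite inE.
have hr : (crank v A0 + s <= crank v [set: I])%N by rewrite crankA0 add0n; lia.
have [C [hC _ _ rC [eq1 min1]]] := Qchain closedA0 hT (subsetT _) hr.
exists C; split => //.
- by rewrite rC crankA0.
- by rewrite !DD_A0 DDq_rel.
- by rewrite !DD_A0.
Qed.

End Dev.

Theorem mainTheorem17 (R : realType) (n : nat) (I : finType)
    (v : I -> 'rV[R]_n) (s : nat) :
  (1 <= s <= crank v [set: I] - 1)%N ->
  exists W : {set I},
    [/\ crank v W = s,
        DD v [set: I] = (DD v W + DDquot v W)%N,
        (minn (DD v [set: I]) s <= DD v W)%N
      & lin_closed v W].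
Proof. exact: main_sec. Qed.
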